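(* Let $\mathsf P'\subset\mathbb R^m$ be a $(\mu',\epsilon')$-net, $0<\Gamma_0\le1$, and $0\le\delta_0\le\frac14$. Suppose $\tau=q*\sigma\subseteq\mathsf P'$ is a $(k+1)$-simplex which is a forbidden configuration certified by $q$ and $B(C,R)$. Then for every $p\in\tau$ there is a ball $B(C_p,R_p)$ circumscribing $\tau_p$ such that $$R_p\le\Big(1+\frac{3\delta_0}{\mu'\Gamma_0^k}\Big)R\quad\text{and}\quad d(p,\partial B(C_p,R_p))\le\frac{6\delta_0}{\mu'^2\Gamma_0^k}\,\ell(\tau_p).$$
   Context: Let $d(x,X)$ denote Euclidean distance from a point to a set; $B(c,r)$ is the open ball. For a finite $\mathsf P\subset\mathbb R^m$ and $\epsilon>0$, $\mathsf P$ is $\epsilon$-dense if $d(x,\mathsf P\cup\partial\,\mathrm{conv}(\mathsf P))<\epsilon$ for every $x\in\mathrm{conv}(\mathsf P)$; it is $\mu\epsilon$-separated if $\|p-q\|\ge\mu\epsilon$ for all distinct $p,q\in\mathsf P$. For $0<\mu\le1$, $\mathsf P$ is a $(\mu,\epsilon)$-net if it is $\epsilon$-dense and $\mu\epsilon$-separated. A simplex is a nonempty finite subset $\sigma\subset\mathbb R^m$ (vertices need not be affinely independent); $\dim\sigma=|\sigma|-1$; faces are nonempty subsets. For $p\in\sigma$, $\sigma_p=\sigma\setminus\{p\}$; for $p\notin\sigma$, $p*\sigma=\sigma\cup\{p\}$. $L(\sigma)$, $\ell(\sigma)$ are the largest and smallest distances between distinct vertices. Altitude $D(p,\sigma)=d(p,\mathrm{aff}(\sigma_p))$.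 Thickness of a $j$-simplex: $\Upsilon(\sigma)=1$ if $j=0$, else $\min_{p}D(p,\sigma)/(jL(\sigma))$. $\sigma$ is $\Gamma_0$-good if every $j$-face $\sigma^j$ satisfies $\Upsilon(\sigma^j)\ge\Gamma_0^j$; $\Gamma_0$-bad otherwise; a $\Gamma_0$-flake is a $\Gamma_0$-bad simplex whose proper faces are all $\Gamma_0$-good. A circumscribing ball of $\sigma$ is an open ball whose boundary contains all vertices of $\sigma$. Forbidden configuration: given finite $\mathsf P'\subset\mathbb R^m$ and parameters $\mu',\epsilon'>0$, $0<\Gamma_0\le1$, $\delta_0\ge0$, a $(k+1)$-simplex $\tau\subseteq\mathsf P'$ with $k\le m$ is a forbidden configuration if it is a $\Gamma_0$-flake and there exist $p\in\tau$ and a circumscribing ball $B(C,R)$ of $\tau_p$ with $R<\epsilon'$ and $\big|\,\|p-C\|-R\,\big|\le\delta_0\mu'\epsilon'$; it is then said to be certified by $p$ and $B(C,R)$. *)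

(* Defs.v *)
From HB Require Import structures.
From mathcomp Require Import all_boot all_order all_algebra.
Set Implicit Arguments. Unset Strict Implicit. Unset Printing Implicit Defensive.
Import Order.TTheory GRing.Theory Num.Theory.
Local Open Scope ring_scope.

Section Defs.
Variables (R : rcfType) (m : nat).
Local Notation V := 'rV[R]_m.

Definition enorm (v : V) : R := Num.sqrt (\sum_(i < m) (v ord0 i) ^+ 2).
Definition edist (x y : V) : R := enorm (x - y).

Definition conv (s : seq V) (x : V) : Prop :=
  exists w : nat -> R, (forall i, (i < size s)%N -> 0 <= w i) /\
    \sum_(i < size s) w i = 1 /\ x = \sum_(i < size s) w i *: s`_i.
Definition aff (s : seq V) (x : V) : Prop :=
  exists w : nat -> R, \sum_(i < size s) w i = 1 /\ x = \sum_(i < size s) w i *: s`_i.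

Definition ball (c : V) (r : R) (y : V) : Prop := edist y c < r.
Definition closure (S : V -> Prop) (y : V) : Prop :=
  forall eta, 0 < eta -> exists z, S z /\ edist y z < eta.
Definition boundary (S : V -> Prop) (y : V) : Prop :=
  closure S y /\ closure (fun z => ~ S z) y.

(* d(x,S) < e, d(x,S) <= e, d(x,S) >= e  (d = infimum of distances) *)
Definition dist_lt (x : V) (S : V -> Prop) (e : R) : Prop :=
  exists y, S y /\ edist x y < e.
Definition dist_le (x : V) (S : V -> Prop) (e : R) : Prop :=
  forall eta, 0 < eta -> exists y, S y /\ edist x y < e + eta.
Definition dist_ge (x : V) (S : V -> Prop) (e : R) : Prop :=
  forall y, S y -> e <= edist x y.

Definition eps_dense (P : seq V) (eps : R) : Prop :=
  forall x, conv P x -> dist_lt x (fun y => y \in P \/ boundary (conv P) y) eps.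
Definition separated (P : seq V) (d : R) : Prop :=
  forall p q, p \in P -> q \in P -> p != q -> d <= edist p q.
Definition is_net (P : seq V) (mu eps : R) : Prop :=
  0 < mu /\ mu <= 1 /\ 0 < eps /\ eps_dense P eps /\ separated P (mu * eps).

(* simplices: duplicate-free lists of points; dim = size - 1; sigma_p = rem p sigma *)
Definition Lmax (s : seq V) : R :=
  \big[Num.max/0]_(p <- s) \big[Num.max/0]_(q <- s | q != p) edist p q.
Definition lmin (s : seq V) : R :=
  \big[Num.min/Lmax s]_(p <- s) \big[Num.min/Lmax s]_(q <- s | q != p) edist p q.

(* Upsilon(s) >= t : for j = 0, 1 >= t; for j >= 1,
   min_p D(p,s)/(j L(s)) >= t, i.e. every altitude D(p,s) = d(p, aff(s_p)) is >= t j L(s) *)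
Definition thick_ge (s : seq V) (t : R) : Prop :=
  let j := (size s).-1 in
  (j = 0%N -> t <= 1) /\
  ((0 < j)%N -> forall p, p \in s -> dist_ge p (aff (rem p s)) (t * j%:R * Lmax s)).

Definition is_face (f s : seq V) : Prop := uniq f /\ f != [::] /\ {subset f <= s}.

Definition good (G0 : R) (s : seq V) : Prop :=
  forall f, is_face f s -> thick_ge f (G0 ^+ (size f).-1).
Definition flake (G0 : R) (s : seq V) : Prop :=
  ~ good G0 s /\ forall f, is_face f s -> (size f < size s)%N -> good G0 f.

Definition circumscribes (c : V) (r : R) (s : seq V) : Prop :=
  forall v, v \in s -> boundary (ball c r) v.

End Defs.

(* Main.v *)
Require Import Defs.
From HB Require Import structures.
From mathcomp Require Import all_boot all_order all_algebra.
From mathcomp Require Import ring lra.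
Import Order.TTheory GRing.Theory Num.Theory.
Local Open Scope ring_scope.
Set Implicit Arguments. Unset Strict Implicit. Unset Printing Implicit Defensive.

Section Geo.
Variables (R : rcfType) (m : nat).
Local Notation V := 'rV[R]_m.
Implicit Types (u v w x y z p c : V).

Definition dot (u v : V) : R := \sum_(i < m) u ord0 i * v ord0 i.
Definition nsq (v : V) : R := dot v v.

Lemma dotC u v : dot u v = dot v u.
Proof. by apply: eq_bigr => i _; rewrite mulrC. Qed.

Lemma dotDl u v w : dot (u + v) w = dot u w + dot v w.
Proof. by rewrite /dot -big_split; apply: eq_bigr => i _; rewrite !mxE mulrDl. Qed.
Lemma dotZl a u w : dot (a *: u) w = a * dot u w.
Proof. by rewrite /dot mulr_sumr; apply: eq_bigr => i _; rewrite !mxE mulrA. Qed.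
Lemma dotNl u w : dot (- u) w = - dot u w.
Proof. by rewrite -scaleN1r dotZl mulN1r. Qed.
Lemma dotBl u v w : dot (u - v) w = dot u w - dot v w.
Proof. by rewrite dotDl dotNl. Qed.
Lemma dotDr u v w : dot w (u + v) = dot w u + dot w v.
Proof. by rewrite dotC dotDl !(dotC w). Qed.
Lemma dotZr a u w : dot w (a *: u) = a * dot w u.
Proof. by rewrite dotC dotZl dotC. Qed.
Lemma dotBr u v w : dot w (u - v) = dot w u - dot w v.
Proof. by rewrite dotC dotBl !(dotC w). Qed.
Lemma dot0l w : dot 0 w = 0.
Proof. by rewrite /dot big1 // => i _; rewrite mxE mul0r. Qed.
Lemma dot0r w : dot w 0 = 0.
Proof. by rewrite dotC dot0l. Qed.

Lemma dot_sumr w n (c : 'I_n -> R) (F : 'I_n -> V) :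
  dot w (\sum_(i < n) c i *: F i) = \sum_(i < n) c i * dot w (F i).
Proof.
elim: n c F => [|n IH] c F; first by rewrite !big_ord0 dot0r.
by rewrite !big_ord_recr /= dotDr IH dotZr.
Qed.

Lemma nsq_ge0 v : 0 <= nsq v.
Proof. by apply: sumr_ge0 => i _; rewrite -expr2 sqr_ge0. Qed.

Lemma nsq_eq0 v : nsq v = 0 -> v = 0.
Proof.
move=> /eqP; rewrite /nsq /dot psumr_eq0; last by move=> i _; rewrite -expr2 sqr_ge0.
move=> /allP H; apply/rowP => i; rewrite mxE.
have := H i (mem_index_enum i); rewrite -expr2 sqrf_eq0 => /eqP.
by rewrite (ord1 ord0).
Qed.

Lemma enormE v : enorm v = Num.sqrt (nsq v).
Proof. by rewrite /enorm /nsq /dot; congr Num.sqrt; apply: eq_bigr => i _; rewrite expr2. Qed.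

Lemma enorm_ge0 v : 0 <= enorm v.
Proof. exact: sqrtr_ge0. Qed.

Lemma enorm_sq v : enorm v ^+ 2 = nsq v.
Proof. by rewrite enormE sqr_sqrtr // nsq_ge0. Qed.

Lemma enorm_eq0 v : enorm v = 0 -> v = 0.
Proof. by move=> H; apply: nsq_eq0; rewrite -enorm_sq H expr2 mul0r. Qed.

Lemma nsqZ a v : nsq (a *: v) = a ^+ 2 * nsq v.
Proof. by rewrite /nsq dotZl dotZr mulrA expr2. Qed.

Lemma enormZ a v : enorm (a *: v) = `|a| * enorm v.
Proof. by rewrite !enormE nsqZ sqrtrM ?sqr_ge0 // sqrtr_sqr. Qed.

Lemma enormN v : enorm (- v) = enorm v.
Proof. by rewrite -scaleN1r enormZ normrN normr1 mul1r. Qed.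

Lemma edistC x y : edist x y = edist y x.
Proof. by rewrite /edist -enormN opprB. Qed.

Lemma nsqD u v : nsq (u + v) = nsq u + 2 * dot u v + nsq v.
Proof. rewrite /nsq dotDl !dotDr (dotC v u); ring. Qed.
Lemma nsqB u v : nsq (u - v) = nsq u - 2 * dot u v + nsq v.
Proof. rewrite /nsq dotBl !dotBr (dotC v u); ring. Qed.

Lemma CS_sq u v : dot u v ^+ 2 <= nsq u * nsq v.
Proof.
have [H0|Hn] := eqVneq (nsq v) 0.
  by rewrite (nsq_eq0 H0) dot0r expr2 mul0r mulr_ge0 ?nsq_ge0.
have Hp : 0 < nsq v by rewrite lt_def Hn nsq_ge0.
set t := dot u v / nsq v.
have := nsq_ge0 (u - t *: v); rewrite nsqB nsqZ dotZr.
have E : t * nsq v = dot u v by rewrite /t mulfVK.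
move=> H.
have : 0 <= nsq u * nsq v - dot u v ^+ 2.
  have -> : nsq u * nsq v - dot u v ^+ 2 = (nsq u - 2 * (t * dot u v) + t ^+ 2 * nsq v) * nsq v.
    rewrite -E; ring.
  by rewrite mulr_ge0 // ltW.
by rewrite subr_ge0.
Qed.

Lemma CS u v : dot u v <= enorm u * enorm v.
Proof.
apply: le_trans (ler_norm _) _.
rewrite !enormE -sqrtrM ?nsq_ge0 // -sqrtr_sqr ler_sqrt; last by rewrite mulr_ge0 ?nsq_ge0.
exact: CS_sq.
Qed.

Lemma enormD u v : enorm (u + v) <= enorm u + enorm v.
Proof.
rewrite [X in X <= _]enormE -(ger0_norm (addr_ge0 (enorm_ge0 u) (enorm_ge0 v))).
rewrite -sqrtr_sqr ler_sqrt ?sqr_ge0 // nsqD sqrrD !enorm_sq.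
rewrite lerD2r lerD2l.
have := CS u v; rewrite mulr2n; lra.
Qed.

Lemma edist_tri x y z : edist x z <= edist x y + edist y z.
Proof. by rewrite /edist; apply: le_trans (enormD (x - y) (y - z)); rewrite addrA subrK. Qed.

Lemma edist_ge0 x y : 0 <= edist x y.
Proof. exact: enorm_ge0. Qed.


Lemma bd_pos c r v : boundary (ball c r) v -> 0 < r.
Proof.
case=> H _; have [z [Hz _]] := H 1 ltr01.
by apply: le_lt_trans Hz; apply: edist_ge0.
Qed.

Lemma bd_eq c r v : boundary (ball c r) v -> edist v c = r.
Proof.
case=> H1 H2; apply/eqP; rewrite eq_le; apply/andP; split.
  rewrite leNgt; apply/negP => Hlt.
  have := H1 (edist v c - r); rewrite subr_gt0 => /(_ Hlt) [z [Hz Hvz]].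
  have := edist_tri v z c; rewrite /ball in Hz; lra.
rewrite leNgt; apply/negP => Hlt.
have := H2 (r - edist v c); rewrite subr_gt0 => /(_ Hlt) [z [Hz Hvz]].
apply: Hz; rewrite /ball; have := edist_tri z v c; rewrite edistC in Hvz; lra.
Qed.

Lemma eq_bd c r v : 0 < r -> edist v c = r -> boundary (ball c r) v.
Proof.
move=> Hr Hv; split => eta Heta; last first.
  by exists v; split; [rewrite /ball Hv ltxx | rewrite /edist subrr enormE /nsq dot0l sqrtr0].
set s := eta / (eta + r).
have Hs0 : 0 < s by rewrite divr_gt0 // addr_gt0.
have Hs1 : s < 1 by rewrite /s ltr_pdivrMr ?addr_gt0 // mul1r ltrDl.
exists (v + s *: (c - v)); split.
  rewrite /ball /edist.
  have -> : v + s *: (c - v) - c = (1 - s) *: (v - c).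
    by apply/rowP => i; rewrite !mxE; ring.
  rewrite enormZ ger0_norm ?subr_ge0 ?ltW //.
  have := Hv; rewrite /edist => ->; rewrite mulrBl mul1r; rewrite gtrBl; exact: mulr_gt0.
rewrite /edist opprD addrA subrr add0r enormN enormZ gtr0_norm //.
rewrite -enormN opprB -/(edist v c) Hv /s.
rewrite mulrAC ltr_pdivrMr ?addr_gt0 //.
rewrite mulrDr ltrDr; exact: mulr_gt0.
Qed.

Lemma edist_rev x c (c' : V) : `|edist x c - edist x c'| <= edist c c'.
Proof.
rewrite ler_norml; have := edist_tri x c c'; have := edist_tri x c' c.
rewrite (edistC c' c); lra.
Qed.

Lemma dist_le_sph u p c r e : enorm u = 1 -> 0 < r -> `|edist p c - r| <= e ->
  dist_le p (boundary (ball c r)) e.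
Proof.
move=> Hu Hr He eta Heta.
set d := edist p c.
have [u' [Hu' Hpc]] : exists u', enorm u' = 1 /\ p - c = d *: u'.
  have [Epc|Npc] := eqVneq p c.
    exists u; split => //; rewrite /d Epc subrr /edist subrr.
    by rewrite enormE /nsq dot0l sqrtr0 scale0r.
  have Hd : 0 < d.
    rewrite lt_def edist_ge0 andbT; apply/eqP => /enorm_eq0 /eqP.
    by rewrite subr_eq0 (negPf Npc).
  exists (d^-1 *: (p - c)); split; last by rewrite scalerA mulfV ?gt_eqF // scale1r.
  by rewrite enormZ ger0_norm ?invr_ge0 ?ltW // mulVf ?gt_eqF.
exists (c + r *: u'); split.
  apply: eq_bd => //; rewrite /edist addrC addKr enormZ Hu' mulr1 ger0_norm // ltW //.
have -> : edist p (c + r *: u') = `|d - r|.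
  rewrite /edist opprD addrA Hpc -scalerBl enormZ Hu' mulr1 //.
by apply: le_lt_trans He _; rewrite ltrDl.
Qed.

Lemma bigmax_ge (F : V -> R) (P : pred V) (s : seq V) x :
  x \in s -> P x -> F x <= \big[Num.max/0]_(i <- s | P i) F i.
Proof.
elim: s => [//|y s IH]; rewrite in_cons big_cons => /orP [/eqP <-|Hx] Px.
  by rewrite Px le_max lexx.
by case: ifP => _; rewrite ?le_max IH ?orbT.
Qed.

Lemma Lmax_ge (s : seq V) a b : a \in s -> b \in s -> b != a -> edist a b <= Lmax s.
Proof.
move=> Ha Hb Hab; rewrite /Lmax.
have H1 := bigmax_ge (fun q => edist a q) (P := fun q => q != a) Hb Hab.
have H2 := bigmax_ge (fun p => \big[Num.max/0]_(q <- s | q != p) edist p q) (P := fun _ => true) Ha isT.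
exact: le_trans H1 H2.
Qed.

Lemma bigmax_ge0 (F : V -> R) (P : pred V) (r : seq V) :
  0 <= \big[Num.max/0]_(i <- r | P i) F i.
Proof.
elim: r => [|a r IH]; first by rewrite big_nil.
by rewrite big_cons; case: ifP => _; rewrite ?le_max IH ?orbT.
Qed.

Lemma Lmax_ge0 (s : seq V) : 0 <= Lmax s.
Proof. exact: bigmax_ge0.
Qed.

Lemma bigmax_le (F : V -> R) (P : pred V) (r : seq V) B : 0 <= B ->
  (forall i, i \in r -> P i -> F i <= B) -> \big[Num.max/0]_(i <- r | P i) F i <= B.
Proof.
move=> HB; elim: r => [|a r IH] H; first by rewrite big_nil.
rewrite big_cons; have IH' : \big[Num.max/0]_(i <- r | P i) F i <= B.
  by apply: IH => i Hi; apply: H; rewrite in_cons Hi orbT.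
case: ifP => Pa //; rewrite ge_max IH' andbT; apply: H => //; exact: mem_head.
Qed.

Lemma bigmin_ge (F : V -> R) (P : pred V) (r : seq V) B idx : B <= idx ->
  (forall i, i \in r -> P i -> B <= F i) -> B <= \big[Num.min/idx]_(i <- r | P i) F i.
Proof.
move=> HB; elim: r => [|a r IH] H; first by rewrite big_nil.
rewrite big_cons; have IH' : B <= \big[Num.min/idx]_(i <- r | P i) F i.
  by apply: IH => i Hi; apply: H; rewrite in_cons Hi orbT.
case: ifP => Pa //; rewrite le_min IH' andbT; apply: H => //; exact: mem_head.
Qed.

Lemma Lmax_le (s : seq V) B : 0 <= B ->
  (forall a b, a \in s -> b \in s -> b != a -> edist a b <= B) -> Lmax s <= B.
Proof.
move=> HB H; apply: bigmax_le => // a Ha _; apply: bigmax_le => // b Hb Hab.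
exact: H.
Qed.

Lemma lmin_ge (s : seq V) B : B <= Lmax s ->
  (forall a b, a \in s -> b \in s -> b != a -> B <= edist a b) -> B <= lmin s.
Proof.
move=> HB H; apply: bigmin_ge => // a Ha _; apply: bigmin_ge => // b Hb Hab.
exact: H.
Qed.

Lemma perp_comb (ds : seq V) y (c : nat -> R) :
  (forall d, d \in ds -> dot y d = 0) -> dot y (\sum_(i < size ds) c i *: ds`_i) = 0.
Proof.
move=> H; rewrite (dot_sumr y (fun i : 'I_(size ds) => c i) (fun i : 'I_(size ds) => ds`_i)).
by apply: big1 => i _; rewrite H ?mulr0 // mem_nth.
Qed.

Lemma sum_cons (d : V) (ds : seq V) (c : nat -> R) :
  \sum_(i < size (d :: ds)) c i *: (d :: ds)`_i = c 0%N *: d + \sum_(i < size ds) c i.+1 *: ds`_i.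
Proof. by rewrite big_ord_recl. Qed.

Lemma perp_exists (ds : seq V) x : exists c : nat -> R,
  forall d, d \in ds -> dot (x - \sum_(i < size ds) c i *: ds`_i) d = 0.
Proof.
elim: ds x => [|d ds IH] x; first by exists (fun _ => 0).
have [c1 H1] := IH x; have [c2 H2] := IH d.
set S1 := \sum_(i < size ds) c1 i *: ds`_i in H1.
set S2 := \sum_(i < size ds) c2 i *: ds`_i in H2.
have [Hd0|Hdn] := eqVneq (nsq (d - S2)) 0.
  have Ed : d = S2 by apply/eqP; rewrite -subr_eq0; apply/eqP; apply: nsq_eq0.
  exists (fun i => if i is j.+1 then c1 j else 0) => e.
  rewrite (sum_cons _ _ (fun i => if i is j.+1 then c1 j else 0)) /= scale0r add0r -/S1 in_cons => /orP [/eqP ->|He]; last exact: H1.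
  by rewrite Ed perp_comb.
set lam := dot (x - S1) (d - S2) / nsq (d - S2).
exists (fun i => if i is j.+1 then c1 j - lam * c2 j else lam) => e.
have -> : x - \sum_(i < size (d :: ds)) (fun i => if i is j.+1 then c1 j - lam * c2 j else lam) i *: (d :: ds)`_i
     = (x - S1) - lam *: (d - S2).
  rewrite (sum_cons _ _ (fun i => if i is j.+1 then c1 j - lam * c2 j else lam)) /=.
  have -> : \sum_(i < size ds) (c1 i - lam * c2 i) *: ds`_i = S1 - lam *: S2.
    rewrite /S1 /S2 scaler_sumr -sumrB; apply: eq_bigr => i _.
    by rewrite scalerBl scalerA.
  rewrite scalerBr; abstract (apply/rowP => i; rewrite !mxE; ring).
have Hds : forall e, e \in ds -> dot (x - S1 - lam *: (d - S2)) e = 0.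
  by move=> f Hf; rewrite dotBl dotZl H1 // H2 // mulr0 subrr.
rewrite in_cons => /orP [/eqP ->|He]; last exact: Hds.
rewrite -[X in dot _ X](subrK S2 d) dotDr perp_comb // addr0 dotBl dotZl.
by rewrite /lam -/(nsq (d - S2)) mulfVK // subrr.
Qed.

Lemma aff1 (o y : V) : aff [:: o] y -> y = o.
Proof.
case=> w [Hw ->]; move: Hw; rewrite /= big_ord1 => Hw.
by rewrite big_ord1 /= Hw scale1r.
Qed.

Lemma two_good G0 (tau : seq V) : 0 < G0 -> G0 <= 1 -> uniq tau -> size tau = 2%N ->
  good G0 tau.
Proof.
move=> HG0 HG1 Ut St f [Uf [Nf Sf]].
have := uniq_leq_size Uf Sf; rewrite St.
case: f Uf Nf Sf => [|a [|b [|c l]]] //= Uf Nf Sf _.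
split => //= _ p Hp y Hy.
have Hab : b != a by move: Uf; rewrite andbT mem_seq1 eq_sym.
have HL : Lmax [:: a; b] <= edist a b.
  apply: Lmax_le; first exact: edist_ge0.
  move=> x z; rewrite !inE => /orP [/eqP ->|/eqP ->] /orP [/eqP ->|/eqP ->];
    rewrite ?eqxx // => _; by rewrite edistC.
have HL0 := Lmax_ge0 [:: a; b].
have Hf : G0 ^+ 1 * 1%:R * Lmax [:: a; b] <= edist a b.
  rewrite expr1 mulr1; apply: le_trans HL; rewrite ler_piMl //.
move: Hp Hy; rewrite !inE => /orP [/eqP ->|/eqP ->] /=.
  by rewrite eqxx => /aff1 ->.
by rewrite eq_sym (negPf Hab) /= eqxx => /aff1 ->; rewrite edistC.
Qed.

Lemma perp_comb_sp (sp : seq V) v0 y (c : nat -> R) :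
  (forall v, v \in sp -> dot y (v - v0) = 0) ->
  dot y (\sum_(i < size sp) c i *: (sp`_i - v0)) = 0.
Proof.
move=> H; rewrite (dot_sumr y (fun i : 'I_(size sp) => c i) (fun i : 'I_(size sp) => sp`_i - v0)).
by apply: big1 => i _; rewrite H ?mulr0 // mem_nth.
Qed.

Lemma perp_sp (sp : seq V) v0 x : exists c : nat -> R,
  forall v, v \in sp -> dot (x - \sum_(i < size sp) c i *: (sp`_i - v0)) (v - v0) = 0.
Proof.
have [c H] := perp_exists (map (fun v => v - v0) sp) x.
exists c => v Hv.
have <- : \sum_(i < size (map (fun v => v - v0) sp)) c i *: (map (fun v => v - v0) sp)`_i
    = \sum_(i < size sp) c i *: (sp`_i - v0).
  rewrite size_map; apply: eq_bigr => i _.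
  rewrite (set_nth_default (v0 - v0)); last by rewrite size_map.
  by rewrite (nth_map v0 _ _ (ltn_ord i)) (set_nth_default 0 v0 (ltn_ord i)).
exact: (H _ (map_f (fun v => v - v0) Hv)).
Qed.

Lemma aff_sp (v0 : V) (rest : seq V) (c : nat -> R) :
  aff (v0 :: rest) (v0 + \sum_(i < size (v0 :: rest)) c i *: ((v0 :: rest)`_i - v0)).
Proof.
exists (fun i => if i is j.+1 then c i else 1 - \sum_(j < size rest) c j.+1); split.
  by rewrite big_ord_recl /= subrK.
rewrite /= !big_ord_recl /= subrr scaler0 add0r.
have -> : \sum_(i < size rest) c (bump 0 i) *: (rest`_i - v0)
   = \sum_(i < size rest) c i.+1 *: rest`_i - (\sum_(i < size rest) c i.+1) *: v0.
  by rewrite scaler_suml -sumrB; apply: eq_bigr => i _; rewrite scalerBr.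
have -> : \sum_(i < size rest) c (bump 0 i) *: rest`_(0 + i) = \sum_(i < size rest) c i.+1 *: rest`_i by [].
set A := \sum_(i < size rest) c i.+1 *: rest`_i.
set B := \sum_(i < size rest) c i.+1.
by apply/rowP => i; rewrite !mxE; ring.
Qed.

Lemma two_elems (s : seq V) : uniq s -> (1 < size s)%N ->
  exists a, exists b, [/\ a \in s, b \in s & b != a].
Proof.
case: s => [|a [|b l]] //= /andP [Ha _] _; exists a, b; split.
- exact: mem_head.
- by rewrite in_cons mem_head orbT.
- by apply/eqP => E; move: Ha; rewrite E mem_head.
Qed.

Lemma unit_vec (a b : V) : b != a -> exists u : V, enorm u = 1.
Proof.
move=> Hab; have Hd : 0 < edist b a.
  rewrite lt_def edist_ge0 andbT; apply/eqP => /enorm_eq0 /eqP.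
  by rewrite subr_eq0 (negPf Hab).
exists ((edist b a)^-1 *: (b - a)).
by rewrite enormZ ger0_norm ?invr_ge0 ?ltW // mulVf ?gt_eqF.
Qed.

Lemma lmin_sep (P s : seq V) d : uniq s -> (1 < size s)%N -> {subset s <= P} ->
  separated P d -> d <= lmin s.
Proof.
move=> Us Ss Sub Hsep.
have [a [b [Ha Hb Hab]]] := two_elems Us Ss.
apply: lmin_ge.
  apply: le_trans (Lmax_ge Ha Hb Hab); apply: Hsep => //; [exact: Sub | exact: Sub | by rewrite eq_sym].
move=> x y Hx Hy Hxy; apply: Hsep; [exact: Sub | exact: Sub | by rewrite eq_sym].
Qed.

End Geo.
Lemma num_main (R : realFieldType) (mu eps g d0 Rad s N L dq : R) :
  0 < mu -> mu <= 1 -> 0 < eps -> 0 < g -> g <= 1 -> 0 <= d0 -> d0 <= 1/4 ->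
  mu * eps <= 2 * Rad -> Rad < eps -> g * (mu * eps) <= N -> 0 <= s ->
  0 <= dq -> `|dq - Rad| <= d0 * mu * eps ->
  s * (2 * N) = `|dq ^+ 2 - Rad ^+ 2| -> mu * eps <= L ->
  Rad + s <= (1 + 3 * d0 / (mu * g)) * Rad /\
  s + s <= 6 * d0 / (mu ^+ 2 * g) * L.
Proof.
move=> Hmu Hmu1 Heps Hg Hg1 Hd0 Hd1 HR HRe HN Hs Hdq Hdd HsN HL.
set del := d0 * mu * eps in Hdd.
have HRp : 0 < Rad by nra.
have Hdel0 : 0 <= del := mulr_ge0 (mulr_ge0 Hd0 (ltW Hmu)) (ltW Heps).
have Hdel1 : del <= mu * eps / 4.
  rewrite /del -mulrA; have := mulr_ge0 (ltW Hmu) (ltW Heps); nra.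
have Hsq : `|dq ^+ 2 - Rad ^+ 2| <= del * (2 * Rad + del).
  have -> : dq ^+ 2 - Rad ^+ 2 = (dq - Rad) * (dq + Rad) by ring.
  rewrite normrM (ger0_norm (addr_ge0 Hdq (ltW HRp))).
  have : dq <= Rad + del by move: Hdd; rewrite ler_norml; lra.
  have := normr_ge0 (dq - Rad); nra.
have Hme : 0 < mu * eps by apply: mulr_gt0.
have H1 : s * (2 * g) * (mu * eps) <= d0 * (2 * Rad + del) * (mu * eps).
  have : s * (2 * g * (mu * eps)) <= s * (2 * N) by nra.
  rewrite HsN => H; have := le_trans H Hsq.
  have -> : del * (2 * Rad + del) = d0 * (2 * Rad + del) * (mu * eps) by rewrite /del; ring.
  by have -> : s * (2 * g * (mu * eps)) = s * (2 * g) * (mu * eps) by ring.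
have H2 : s * (2 * g) <= d0 * (2 * Rad + del) by rewrite -(ler_pM2r Hme).
have Hdel2 : d0 * del <= d0 * (Rad / 2) by apply: ler_wpM2l => //; lra.
have H3 : s * g <= 5/4 * (d0 * Rad) by nra.
have Hsg : 0 <= s * g by apply: mulr_ge0 => //; apply: ltW.
have Hmg : 0 < mu * g by apply: mulr_gt0.
split.
  rewrite mulrDl mul1r lerD2l mulrAC ler_pdivlMr //.
  have : s * g * mu <= s * g by rewrite ler_piMr.
  have : 0 <= d0 * Rad by apply: mulr_ge0 => //; apply: ltW.
  nra.
have Hm2 : 0 < mu ^+ 2 * g by apply: mulr_gt0 => //; apply: exprn_gt0.
rewrite mulrAC ler_pdivlMr //.
have H4 : s * g <= d0 * eps * 9 / 8.
  have : d0 * del <= d0 * (eps / 4) by apply: ler_wpM2l => //; have := ler_pM2r Heps; nra.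
  have : d0 * Rad <= d0 * eps by apply: ler_wpM2l => //; apply: ltW.
  nra.
have H5 : mu * (s * g) <= mu * (d0 * eps * 9 / 8) by apply: ler_wpM2l => //; apply: ltW.
have H6 : mu ^+ 2 * (s * g) <= mu * (s * g) by rewrite expr2 -mulrA ler_piMl // mulr_ge0 // ltW.
have H7 : 6 * d0 * (mu * eps) <= 6 * d0 * L by apply: ler_wpM2l => //; lra.
have -> : (s + s) * (mu ^+ 2 * g) = 2 * (mu ^+ 2 * (s * g)) by ring.
nra.
Qed.

Lemma num_pq (R : realFieldType) (mu eps g d0 Rad L : R) :
  0 < mu -> mu <= 1 -> 0 < eps -> 0 < g -> g <= 1 -> 0 <= d0 -> 0 <= Rad ->
  mu * eps <= L ->
  Rad <= (1 + 3 * d0 / (mu * g)) * Rad /\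
  d0 * mu * eps <= 6 * d0 / (mu ^+ 2 * g) * L.
Proof.
move=> Hmu Hmu1 Heps Hg Hg1 Hd0 HR HL.
have Hmg : 0 < mu * g by apply: mulr_gt0.
have Hm2 : 0 < mu ^+ 2 * g by apply: mulr_gt0 => //; apply: exprn_gt0.
split.
  rewrite mulrDl mul1r lerDl; apply: mulr_ge0 => //.
  by apply: divr_ge0; [apply: mulr_ge0 | apply: ltW].
rewrite [X in _ <= X]mulrAC ler_pdivlMr //.
have H1 : mu ^+ 2 * g <= 1.
  have : mu ^+ 2 <= 1 by rewrite expr_le1 // ltW.
  have := exprn_gt0 2 Hmu; nra.
have H2 : 0 <= d0 * mu * eps by apply: mulr_ge0; [apply: mulr_ge0 => // | ]; apply: ltW.
have H7 : 6 * d0 * (mu * eps) <= 6 * d0 * L by apply: ler_wpM2l => //; lra.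
nra.
Qed.

Theorem mainTheorem7 (R : rcfType) (m : nat) (P' : seq 'rV[R]_m)
  (mu' eps' G0 d0 : R) (k : nat) (tau : seq 'rV[R]_m) (q C : 'rV[R]_m) (Rad : R) :
  is_net P' mu' eps' ->
  0 < G0 -> G0 <= 1 -> 0 <= d0 -> d0 <= 1 / 4 ->
  (* tau = q * sigma is a (k+1)-simplex in P', forbidden configuration certified by q, B(C,Rad) *)
  uniq tau -> {subset tau <= P'} -> size tau = (k + 2)%N -> (k <= m)%N ->
  flake G0 tau -> q \in tau ->
  circumscribes C Rad (rem q tau) -> Rad < eps' ->
  `| edist q C - Rad | <= d0 * mu' * eps' ->
  forall p, p \in tau ->
    exists (Cp : 'rV[R]_m) (Rp : R),
      circumscribes Cp Rp (rem p tau) /\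
      Rp <= (1 + 3 * d0 / (mu' * G0 ^+ k)) * Rad /\
      dist_le p (boundary (ball Cp Rp)) (6 * d0 / (mu' ^+ 2 * G0 ^+ k) * lmin (rem p tau)).
Proof.
move=> [Hmu [Hmu1 [Heps [_ Hsep]]]] HG0 HG1 Hd0 Hd1 Ut Sub St Hkm [Hbad Hfaces] Hq Hcirc HRe Hdq p Hp.
case: k St Hkm Hdq => [|k] St _ Hdq.
  by exfalso; apply: Hbad; apply: two_good => //; rewrite St.
have Hg : 0 < G0 ^+ k.+1 by apply: exprn_gt0.
have Hg1 : G0 ^+ k.+1 <= 1 by apply: exprn_ile1 => //; apply: ltW.
set sig := rem q tau.
have Usig : uniq sig := rem_uniq q Ut.
have Ssig : size sig = k.+2 by rewrite size_rem // St addn2.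
have Hsig : forall v, v \in sig -> edist v C = Rad := fun v Hv => bd_eq (Hcirc v Hv).
have Hsubsig : {subset sig <= P'} := fun v Hv => Sub v (mem_rem Hv).
have H2sig : (1 < size sig)%N by rewrite Ssig.
have [a [b [Ha Hb Hab]]] := two_elems Usig H2sig.
have HRp : 0 < Rad := bd_pos (Hcirc a Ha).
have [u Hu] := unit_vec Hab.
have HRad2 : mu' * eps' <= 2 * Rad.
  have := Hsep b a (Hsubsig b Hb) (Hsubsig a Ha) Hab.
  have := edist_tri b C a; rewrite (edistC C a) (Hsig a Ha) (Hsig b Hb); lra.
have [->|Hpq] := eqVneq p q.
  exists C, Rad.
  have HL : mu' * eps' <= lmin sig := lmin_sep Usig H2sig Hsubsig Hsep.
  have [H1 H2] := num_pq Hmu Hmu1 Heps Hg Hg1 Hd0 (ltW HRp) HL.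
  split => //; split => //.
  by apply: (dist_le_sph Hu HRp); apply: le_trans Hdq H2.
have Hqp : q != p by rewrite eq_sym.
set tp := rem p tau.
have Utp : uniq tp := rem_uniq p Ut.
have Hqtp : q \in tp := rem_mem Hqp Hq.
have Stp : size tp = k.+2 by rewrite size_rem // St addn2.
have Htp : forall v, v \in tp -> (v != p) && (v \in tau).
  by move=> v; rewrite (mem_rem_uniq p Ut) inE.
set sp := rem q tp.
have Usp : uniq sp := rem_uniq q Utp.
have Ssp : size sp = k.+1 by rewrite size_rem // Stp.
have Hspm : forall v, v \in sp -> (v != q) && (v \in tp).
  by move=> v; rewrite (mem_rem_uniq q Utp) inE.
have Hspsig : forall v, v \in sp -> v \in sig.
  move=> v /Hspm /andP [Hvq /Htp /andP [_ Hv]]; exact: rem_mem Hvq Hv.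
have [v0 [rest Esp]] : exists v0, exists rest, sp = v0 :: rest.
  by move: Ssp; rewrite /sp; case: (rem q tp) => [|v0 rest] // _; exists v0, rest.
have Hv0sp : v0 \in sp by rewrite Esp mem_head.
have /andP [Hv0q Hv0tp] := Hspm v0 Hv0sp.
have Hpsig : p \in sig := rem_mem Hpq Hp.
have [c Hc] := perp_sp sp v0 (q - v0).
set S := \sum_(i < size sp) c i *: (sp`_i - v0) in Hc.
set w := q - v0 - S.
have Hperp : forall v, v \in sp -> dot w (v - v0) = 0 := Hc.
have HwS : dot w S = 0 := perp_comb_sp c Hperp.
have Ew : q - w = v0 + S by rewrite /w; apply/rowP => i; rewrite !mxE; ring.
have Haff : aff (rem q tp) (q - w).
  rewrite -/sp Ew /S; move: (c); rewrite Esp => c'; exact: aff_sp.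
have Hftp : is_face tp tau.
  split => //; split; last by move=> v /mem_rem.
  by apply/eqP => E; move: Hqtp; rewrite E.
have Hgtp : good G0 tp by apply: Hfaces => //; rewrite Stp St addn2.
have Hself : is_face tp tp by split => //; split => //; case: Hftp => _ [].
have [_ Hth] := Hgtp tp Hself.
move: Hth; rewrite Stp /= => /(_ isT q Hqtp) Hth.
have HwN : G0 ^+ k.+1 * k.+1%:R * Lmax tp <= enorm w.
  by have := Hth (q - w) Haff; rewrite /edist opprB addrC subrK.
have HLtp : mu' * eps' <= Lmax tp.
  apply: le_trans (Lmax_ge Hqtp Hv0tp Hv0q).
  apply: Hsep; [exact: Sub | | by rewrite eq_sym].
  by apply: Sub; move: (Htp v0 Hv0tp) => /andP [].
set g := G0 ^+ k.+1.
have HN : g * (mu' * eps') <= enorm w.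
  apply: le_trans HwN; rewrite -mulrA; apply: ler_wpM2l; first exact: ltW.
  have H0L := Lmax_ge0 tp.
  apply: le_trans (HLtp) _; apply: ler_peMl => //.
  by rewrite ler1n.
have HNp : 0 < enorm w.
  by apply: lt_le_trans HN; apply: mulr_gt0 => //; apply: mulr_gt0.
have Hnw : 0 < nsq w by rewrite -enorm_sq exprn_gt0.
set t := (nsq (q - C) - Rad ^+ 2) / (2 * nsq w).
set Cp := C + t *: w.
set a0 := dot (v0 - C) w.
have HCp : forall v, nsq (v - Cp) = nsq (v - C) - 2 * t * dot (v - C) w + t ^+ 2 * nsq w.
  move=> v; rewrite /Cp opprD addrA nsqB dotZr nsqZ; ring.
have Ht : t * (2 * nsq w) = nsq (q - C) - Rad ^+ 2.
  by rewrite /t mulfVK // mulf_neq0 // ?gt_eqF // ltr0n.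
have Hsph : forall v, v \in tp -> nsq (v - Cp) = Rad ^+ 2 - 2 * t * a0 + t ^+ 2 * nsq w.
  have E1 : forall v, v - C = (v - v0) + (v0 - C) by move=> v; rewrite addrA subrK.
  move=> v Hv; rewrite HCp.
  have [->|Hvq] := eqVneq v q.
    have -> : dot (q - C) w = nsq w + a0.
      rewrite E1 dotDl -/a0; congr (_ + _).
      have -> : q - v0 = w + S by rewrite /w; apply/rowP => i; rewrite !mxE; ring.
      by rewrite dotDl dotC HwS addr0.
    have -> : nsq (q - C) = Rad ^+ 2 + t * (2 * nsq w) by rewrite Ht; ring.
    ring.
  have Hvsp : v \in sp by rewrite (mem_rem_uniq q Utp) inE Hvq Hv.
  rewrite [X in dot X w](E1 v) dotDl -/a0 dotC Hperp // add0r -enorm_sq.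
  by rewrite -/(edist v C) Hsig // Hspsig.
set Rp := edist v0 Cp.
have Hrad : forall v, v \in tp -> edist v Cp = Rp.
  by move=> v Hv; rewrite /Rp /edist !enormE Hsph // Hsph.
have HRpp : 0 < Rp.
  rewrite lt_def edist_ge0 andbT; apply/eqP => H0.
  have E0 : v0 = Cp by apply/eqP; rewrite -subr_eq0; apply/eqP; apply: enorm_eq0.
  have E1 : q = Cp.
    by apply/eqP; rewrite -subr_eq0; apply/eqP; apply: enorm_eq0; rewrite -/(edist q Cp) Hrad.
  by move: Hv0q; rewrite E0 E1 eqxx.
exists Cp, Rp.
set s := `|t| * enorm w.
have Hs0 : 0 <= s by apply: mulr_ge0 => //; apply: enorm_ge0.
have HCC : edist Cp C = s by rewrite /edist /Cp addrAC subrr add0r enormZ.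
have Hs2N : s * (2 * enorm w) = `|edist q C ^+ 2 - Rad ^+ 2|.
  rewrite /edist enorm_sq -Ht normrM (ger0_norm (ltW (mulr_gt0 _ Hnw))) ?ltr0n //.
  by rewrite /s -enorm_sq; ring.
have Hb1 : `|Rp - Rad| <= s by rewrite -HCC -(Hsig v0 (Hspsig v0 Hv0sp)); apply: edist_rev.
have Hb2 : `|edist p Cp - Rad| <= s by rewrite -HCC -(Hsig p Hpsig); apply: edist_rev.
have Hb3 : `|edist p Cp - Rp| <= s + s.
  move: Hb1 Hb2; rewrite !ler_norml; lra.
have HL : mu' * eps' <= lmin tp.
  apply: (lmin_sep (P := P')) => //; first by rewrite Stp.
  by move=> v /Htp /andP [_ /Sub].
have [H1 H2] := num_main Hmu Hmu1 Heps Hg Hg1 Hd0 Hd1 HRad2 HRe HN Hs0 (edist_ge0 q C) Hdq Hs2N HL.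
split.
  by move=> v Hv; apply: eq_bd => //; apply: Hrad.
split.
  by apply: le_trans H1; move: Hb1; rewrite ler_norml; lra.
by apply: (dist_le_sph Hu HRpp); apply: le_trans Hb3 H2.
Qed.
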